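(* Let $(W,S)$, $\Gamma$, $L$ be as in the context and let $E\mapsto\tilde{a}_E$ be the function defined recursively there. Then for every $E\in\mathrm{Irr}(W)$ we have $\tilde a_E\ge\tilde a'_E\ge 0$ and $\tilde a_{E\otimes\mathrm{sgn}}-\tilde a_E=\omega_L(E)$. Moreover, if $J\subsetneqq S$, $M\in\mathrm{Irr}(W_J)$ and $E$ is an irreducible constituent of the representation induced from $M$, then $\tilde a_E\ge\tilde a_M$.
   Context: $(W,S)$ is a finite Coxeter group with length function $l$. $\Gamma$ is an abelian group with a total order $\le$ compatible with addition. $L\colon W\to\Gamma$ is a weight function: $L(ww')=L(w)+L(w')$ whenever $l(ww')=l(w)+l(w')$; assume $L(s)\ge 0$ for all $s\in S$. For $J\subseteq S$, $W_J$ is the parabolic subgroup generated by $J$ (a Coxeter group with generators $J$), and $L$ restricts to a weight function on it. $\mathrm{Irr}(W)$ is the set of complex irreducible representations of $W$; $\mathrm{sgn}$ is the sign representation. Let $S'\subseteq S$ be a set of representatives of the conjugacy classes of $W$ contained in $T=\{wsw^{-1}\}$, and $N_s$ the size of the class of $s$; set $\omega_L(E):=\sum_{s\in S'}\frac{N_s\,\mathrm{trace}(s,E)}{\dim E}L(s)\in\Gamma$ (these coefficients are integers). For $M\in\mathrm{Irr}(W_J)$, write $M\uparrow E$ if $E$ is a constituent of $\mathrm{Ind}_{W_J}^W M$. Definition of $\tilde a$ (recursively over parabolic subgroups): if $W=\{1\}$, $\tilde a_{1_W}:=0$. Otherwise, assuming $\tilde a$ defined for all $W_J$, $J\subsetneqq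 S$, set $\tilde a'_E:=\max\{\tilde a_M\mid M\in\mathrm{Irr}(W_J),\ J\subsetneqq S,\ M\uparrow E\}$, and $\tilde a_E:=\tilde a'_E$ if $\tilde a'_{E\otimes\mathrm{sgn}}-\tilde a'_E\le\omega_L(E)$, and $\tilde a_E:=\tilde a'_{E\otimes\mathrm{sgn}}-\omega_L(E)$ otherwise. *)

(* Defs.v *)
From HB Require Import structures.
From mathcomp Require Import all_boot all_order all_algebra all_fingroup all_solvable all_field all_character.
Set Implicit Arguments. Unset Strict Implicit. Unset Printing Implicit Defensive.
Import Order.TTheory GRing.Theory Num.Theory.

Local Open Scope ring_scope.
Section Coxeter.
Variable gT : finGroupType.

Definition wprod (t : seq gT) : gT := (\prod_(s <- t) s)%g.

(* length of w with respect to the generating set S: minimal size of a word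
   in S with product w (all elements of <<S>>%G have such a word of size < #|gT|);
   default #|gT| for elements outside <<S>>%G. *)
Definition has_word (S : {set gT}) (w : gT) (n : nat) : bool :=
  [exists t : n.-tuple gT, all (mem S) t && (wprod t == w)].

Definition len (S : {set gT}) (w : gT) : nat :=
  \big[minn/#|gT|]_(n < #|gT|.+1 | has_word S w n) n.

(* (<<S>>%G, S) is a Coxeter system: S consists of involutions and the exchange
   condition holds (Bourbaki, Lie IV, 1.6, Thm 1 characterisation). *)
Definition coxeter_system (S : {set gT}) : Prop :=
  (forall s, s \in S -> s != 1%g /\ (s ^+ 2 = 1)%g) /\
  (forall (t : seq gT) (s : gT), s \in S -> all (mem S) t ->
     len S (wprod t) = size t -> (len S (s * wprod t)%g <= size t)%N ->
     exists2 i, (i < size t)%N & (s * wprod t)%g = wprod (take i t ++ drop i.+1 t)).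

Definition weight_function (Gamma : porderZmodType) (S : {set gT}) (L : gT -> Gamma)
  : Prop :=
  (forall w w', w \in <<S>>%G -> w' \in <<S>>%G ->
     len S (w * w')%g = (len S w + len S w')%N -> L (w * w')%g = (L w + L w')%R) /\
  (forall s, s \in S -> (0 <= L s)%R).

Definition sgnI (J : {set gT}) (E : Iirr <<J>>%G) : Iirr <<J>>%G :=
  odflt E [pick j : Iirr <<J>>%G |
    [forall x in <<J>>%G, 'chi_j x == ((-1) ^+ len J x * 'chi_E x)%R]].

Variable Gamma : porderZmodType.
Variable L : gT -> Gamma.

(* omega_L(E) for W_J, with the canonical set of representatives
   S' = { s in J | s = repr (class of s in W_J meet J) } *)
Definition omega (J : {set gT}) (E : Iirr <<J>>%G) : Gamma :=
  let chi := 'chi[<<J>>%G]_E in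
  (\sum_(s in J | s == (repr ((s ^: <<J>>%G)%g :&: J))%g)
      L s *~ Num.floor (#|(s ^: <<J>>%G)%g|%:R * chi s / chi 1%g))%R.

Definition seqmax (l : seq Gamma) : Gamma :=
  foldr (fun x y => Order.max x y) (head 0%R l) l.

Definition aprime (f : forall K : {set gT}, Iirr <<K>>%G -> Gamma)
    (J : {set gT}) (E : Iirr <<J>>%G) : Gamma :=
  seqmax (flatten [seq [seq f K M | M <- enum (Iirr <<K>>%G) &
                          E \in irr_constt ('Ind[<<J>>%G] 'chi[<<K>>%G]_M)]
                   | K <- enum [set K : {set gT} | K \proper J]]).

Definition astep (f : forall K : {set gT}, Iirr <<K>>%G -> Gamma)
    (J : {set gT}) (E : Iirr <<J>>%G) : Gamma :=
  if (aprime f (sgnI E) - aprime f E <= omega E)%R then aprime f E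
  else (aprime f (sgnI E) - omega E)%R.

Fixpoint atl (n : nat) : forall J : {set gT}, Iirr <<J>>%G -> Gamma :=
  match n with
  | 0 => fun _ _ => 0%R
  | n'.+1 => fun J E => if J == set0 then 0%R else astep (atl n') E
  end.

(* a~_E and a~'_E for E in Irr(W_J) (fuel #|J|.+1 suffices) *)
Definition atilde (J : {set gT}) (E : Iirr <<J>>%G) : Gamma := atl #|J|.+1 E.
Definition atilde' (J : {set gT}) (E : Iirr <<J>>%G) : Gamma :=
  aprime (atl #|J|) E.

End Coxeter.

(* Main.v *)
Require Import Defs.
From HB Require Import structures.
From mathcomp Require Import all_boot all_order all_algebra all_fingroup all_solvable all_field all_character.
From mathcomp Require Import zify.
Set Implicit Arguments. Unset Strict Implicit. Unset Printing Implicit Defensive.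
Import Order.TTheory GRing.Theory Num.Theory.
Local Open Scope ring_scope.



Section Words.
Variable gT : finGroupType.
Implicit Types (S : {set gT}) (t : seq gT) (w : gT).

Lemma wprod_nil : wprod [::] = 1%g :> gT.
Proof. by rewrite /wprod big_nil. Qed.
Lemma wprod_cons s t : wprod (s :: t) = (s * wprod t)%g.
Proof. by rewrite /wprod big_cons. Qed.
Lemma wprod_cat t1 t2 : wprod (t1 ++ t2) = (wprod t1 * wprod t2)%g.
Proof. by rewrite /wprod big_cat. Qed.

Lemma has_wordP S w n :
  reflect (exists t, [/\ size t = n, all (mem S) t & wprod t = w]) (has_word S w n).
Proof.
apply: (iffP existsP) => [[t /andP[Ht /eqP Hw]] | [t [Hs Ht Hw]]].
  by exists (val t); rewrite size_tuple.
have tt : size t == n by rewrite Hs.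
by exists (Tuple tt); rewrite /= Ht Hw eqxx.
Qed.

Lemma bigmin_le_term k d (P : pred 'I_k) (F : 'I_k -> nat) i0 :
  P i0 -> (\big[minn/d]_(i | P i) F i <= F i0)%N.
Proof.
move=> Pi; have : i0 \in index_enum 'I_k by rewrite mem_index_enum.
elim: (index_enum _) => [|x r IH] //; rewrite inE big_cons.
case/orP => [/eqP <-|/IH]; first by rewrite Pi geq_minl.
by case: (P x) => // H; rewrite geq_min H orbT.
Qed.

Lemma bigmin_le_idx k d (P : pred 'I_k) (F : 'I_k -> nat) :
  (\big[minn/d]_(i | P i) F i <= d)%N.
Proof.
elim: (index_enum _) => [|x r IH]; first by rewrite big_nil.
by rewrite big_cons; case: (P x) => //; rewrite geq_min IH orbT.
Qed.

Lemma len_le S w n : has_word S w n -> (len S w <= n)%N.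
Proof.
move=> H; rewrite /len; case: (ltnP n #|gT|.+1) => Hn.
  exact: (@bigmin_le_term _ _ _ (fun i : 'I_#|gT|.+1 => nat_of_ord i) (Ordinal Hn)).
apply: leq_trans (bigmin_le_idx _ _ _) _; lia.
Qed.

Lemma len_attained S w n : (n <= #|gT|)%N -> has_word S w n -> has_word S w (len S w).
Proof.
move=> Hn Hw; rewrite /len.
have : (\big[minn/#|gT|]_(i < #|gT|.+1 | has_word S w i) i == #|gT|)
       || has_word S w (\big[minn/#|gT|]_(i < #|gT|.+1 | has_word S w i) i).
  elim: (index_enum _) => [|x r IH]; first by rewrite big_nil eqxx.
  rewrite big_cons; case Hx: (has_word S w x) => //.
  by rewrite /minn; case: ifP => _ //; rewrite Hx orbT.
case/orP => // /eqP E; rewrite E.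
have Hn' : (n < #|gT|.+1)%N by [].
have := @bigmin_le_term _ #|gT| (fun i : 'I_#|gT|.+1 => has_word S w i) (fun i => nat_of_ord i) (Ordinal Hn') Hw.
rewrite E /= => Hle; have -> : #|gT| = n by apply/eqP; rewrite eqn_leq Hn Hle.
exact: Hw.
Qed.

Lemma wprod_in S t : all (mem S) t -> wprod t \in <<S>>%g.
Proof.
elim: t => [|s t IH] /=; first by rewrite wprod_nil group1.
by case/andP => Hs Ht; rewrite wprod_cons groupM ?IH ?mem_gen.
Qed.

Lemma gen_word S w : w \in <<S>>%g -> exists t, all (mem S) t /\ wprod t = w.
Proof.
case/gen_prodgP => n [c Hc ->].
exists [seq c i | i <- enum 'I_n]; split.
  by apply/allP => x /mapP [i _ ->]; exact: Hc.
by rewrite /wprod big_map enumT.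
Qed.

Lemma short_word S w t : all (mem S) t -> wprod t = w ->
  exists n, (n <= #|gT|)%N /\ has_word S w n.
Proof.
move=> Ht Hw.
have ex : exists m, has_word S w m.
  by exists (size t); apply/has_wordP; exists t.
case: (ex_minnP ex) => m /has_wordP [t0 [Hs Ht0 Hw0]] Hmin.
exists m; split; last by apply/has_wordP; exists t0.
rewrite leqNgt; apply/negP => Hbig.
pose f (i : 'I_m.+1) := wprod (take i t0).
have : ~~ injectiveb f.
  apply/negP => /injectiveP Hinj.
  have := leq_card f Hinj; rewrite card_ord => H; have := ltn_trans H Hbig; by rewrite ltnn.
move=> /injectivePn [i [j Hij Hf]].
wlog lt_ij : i j Hij Hf / (i < j)%N.
  move=> Hwlog; case: (ltngtP i j) => H.
  - exact: Hwlog Hij Hf H.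
  - by apply: Hwlog H; [rewrite eq_sym | rewrite Hf].
  - by move/val_inj: H; apply/eqP.
have Hj : (j <= m)%N by rewrite -ltnS.
have := Hmin (i + (m - j))%N; rewrite leqNgt.
suff -> : (i + (m - j) < m)%N.
  move=> H; suff : false by []; apply: H; apply/has_wordP; exists (take i t0 ++ drop j t0); split.
  - rewrite size_cat size_take size_drop Hs; have : (i < m)%N by lia.
    by move=> ->.
  - have Ha k : all (mem S) (take k t0) && all (mem S) (drop k t0).
      by rewrite -all_cat cat_take_drop.
    by rewrite all_cat (andP (Ha i)).1 (andP (Ha j)).2.
  - by rewrite wprod_cat; move: Hf; rewrite /f => ->; rewrite -wprod_cat cat_take_drop.
lia.
Qed.

Lemma len_word S w : w \in <<S>>%g ->
  exists t, [/\ size t = len S w, all (mem S) t & wprod t = w].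
Proof.
case/gen_word => t [Ht Hw]; case: (short_word Ht Hw) => n [Hn Hhw].
by apply/has_wordP; exact: len_attained Hn Hhw.
Qed.

End Words.



Section Parity.
Variable gT : finGroupType.
Variable S : {set gT}.
Hypothesis HS : coxeter_system S.

Lemma len_sw s w : s \in S -> w \in <<S>>%g -> odd (len S (s * w)) = ~~ odd (len S w).
Proof.
move=> Hs Hw.
case: (len_word Hw) => t1 [Hst Ht Hwt].
have Hsw : (s * w)%g \in <<S>>%g by rewrite groupM // mem_gen.
case: (len_word Hsw) => t2 [Hst2 Ht2 Hwt2].
have H1 : (len S (s * w) <= (len S w).+1)%N.
  apply: len_le; apply/has_wordP; exists (s :: t1); split => //=.
  - by rewrite Hst.
  - by rewrite Hs.
  - by rewrite wprod_cons Hwt.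
have H2 : (len S w <= (len S (s * w)).+1)%N.
  apply: len_le; apply/has_wordP; exists (s :: t2); split => //=.
  - by rewrite Hst2.
  - by rewrite Hs.
  - have := proj2 ((proj1 HS) s Hs); rewrite expgS expg1 => Hss.
    by rewrite wprod_cons Hwt2 mulgA Hss mul1g.
have H3 : len S (s * w) != len S w.
  apply/eqP => Heq0; have Hle := eq_leq Heq0.
  have Hred : len S (wprod t1) = size t1 by rewrite Hwt Hst.
  have Hle' : (len S (s * wprod t1) <= size t1)%N by rewrite Hwt Hst.
  have [i Hi Heq] := (proj2 HS) t1 s Hs Ht Hred Hle'.
  have : (len S (s * w) <= (size t1).-1)%N.
    apply: len_le; apply/has_wordP; exists (take i t1 ++ drop i.+1 t1); split.
    - rewrite size_cat size_take size_drop Hi; lia.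
    - have Ha k : all (mem S) (take k t1) && all (mem S) (drop k t1).
        by rewrite -all_cat cat_take_drop.
      by rewrite all_cat (andP (Ha i)).1 (andP (Ha i.+1)).2.
    - by rewrite -Heq Hwt.
  move: Hle; lia.
have [-> | ->] : len S (s * w) = (len S w).+1 \/ len S w = (len S (s * w)).+1 by lia.
  by rewrite oddS.
by rewrite oddS negbK.
Qed.

Lemma odd_len_word t : all (mem S) t -> odd (len S (wprod t)) = odd (size t).
Proof.
elim: t => [|s t IH] /=.
  move=> _; have : (len S (wprod [::]) <= 0)%N.
    by apply: len_le; apply/has_wordP; exists [::].
  by rewrite leqn0 => /eqP ->.
case/andP => Hs Ht; rewrite wprod_cons len_sw ?wprod_in ?IH //.
Qed.

Lemma odd_len_mul x y : x \in <<S>>%g -> y \in <<S>>%g ->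
  odd (len S (x * y)) = odd (len S x) (+) odd (len S y).
Proof.
move=> /gen_word [tx [Htx <-]] /gen_word [ty [Hty <-]].
by rewrite -wprod_cat !odd_len_word ?all_cat ?Htx ?Hty // size_cat oddD.
Qed.

Lemma len_gen1 s : s \in S -> odd (len S s).
Proof.
move=> Hs; have -> : s = wprod [:: s] by rewrite wprod_cons wprod_nil mulg1.
by rewrite odd_len_word //= Hs.
Qed.

Lemma len_1 : len S 1 = 0%N.
Proof.
apply/eqP; rewrite -leqn0; apply: len_le; apply/has_wordP; exists [::].
by rewrite wprod_nil.
Qed.

End Parity.



Section Rat.
Variable gT : finGroupType.
Variable G : {group gT}.

Lemma chi_invol_rat (i : Iirr G) s : s \in G -> (s ^+ 2 = 1)%g -> 'chi_i s \in Crat.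
Proof.
move=> Gs s2.
pose H := <[s]>%G.
have sHG : H \subset G by rewrite cycle_subG.
have -> : 'chi_i s = 'Res[H] 'chi_i s by rewrite cfResE // cycle_id.
rewrite (cfun_sum_constt ('Res[H] 'chi_i)) sum_cfunE rpred_sum // => j _.
rewrite cfunE rpredM //.
  have := Cnat_cfdot_char_irr j (cfRes_char H (irr_char i)).
  by case/natrP => n ->; apply: rpred_nat.
have Lj : 'chi[H]_j \is a linear_char by apply/char_abelianP; apply: cycle_abelian.
have : 'chi[H]_j s ^+ 2 == 1.
  by rewrite -(lin_charX Lj) ?cycle_id // s2 lin_char1.
by rewrite sqrf_eq1 => /orP[] /eqP ->; rewrite ?rpredN rpred1.
Qed.

End Rat.



Section Sign.
Variable gT : finGroupType.
Variable S : {set gT}.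
Hypothesis HS : coxeter_system S.

Definition sgn_mx (x : gT) : 'M[algC]_1 := ((-1) ^+ len S x)%:M.

Lemma sgn_mx_repr : mx_repr <<S>>%G sgn_mx.
Proof.
split; first by rewrite /sgn_mx len_1 expr0.
move=> x y Hx Hy; rewrite /sgn_mx -scalar_mxM -signr_odd odd_len_mul //.
by rewrite signr_addb !signr_odd.
Qed.

Definition sgn_rep := MxRepresentation sgn_mx_repr.
Definition sgn_chi : 'CF(<<S>>%G) := cfRepr sgn_rep.

Lemma sgn_chiE x : x \in <<S>>%g -> sgn_chi x = (-1) ^+ len S x.
Proof. by move=> Hx; rewrite cfunE Hx mulr1n /= mxtrace_scalar. Qed.

Lemma sgn_chi_lin : sgn_chi \is a linear_char.
Proof. by rewrite qualifE/= cfRepr_char /= cfRepr1. Qed.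

Lemma sgnI_spec (E : Iirr <<S>>%G) x : x \in <<S>>%g ->
  'chi_(sgnI E) x = (-1) ^+ len S x * 'chi_E x.
Proof.
have : sgn_chi * 'chi_E \in irr <<S>>%G by apply: mul_lin_irr (sgn_chi_lin) (mem_irr E).
case/irrP => j Hj; rewrite /sgnI; case: pickP => [j0 /forall_inP H | /(_ j)].
  by move=> Hx; apply/eqP; apply: H.
move/negP => []; apply/forall_inP => y Hy.
by rewrite -Hj cfunE sgn_chiE.
Qed.

Lemma sgnIK (E : Iirr <<S>>%G) : sgnI (sgnI E) = E.
Proof.
apply: irr_inj; apply/cfun_inP => x Hx.
by rewrite !sgnI_spec // mulrA -exprD -signr_odd oddD addbb expr0 mul1r.
Qed.

Lemma sgnI_gen (E : Iirr <<S>>%G) s : s \in S -> 'chi_(sgnI E) s = - 'chi_E s.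
Proof.
move=> Hs; by rewrite sgnI_spec ?mem_gen // -signr_odd len_gen1 // expr1 mulN1r.
Qed.

Lemma sgnI_1 (E : Iirr <<S>>%G) : 'chi_(sgnI E) 1%g = 'chi_E 1%g.
Proof. by rewrite sgnI_spec ?group1 // len_1 expr0 mul1r. Qed.

Lemma omega_sgnI (Gamma : porderZmodType) (L : gT -> Gamma) (E : Iirr <<S>>%G) :
  omega L (sgnI E) = - omega L E.
Proof.
rewrite /omega -sumrN; apply: eq_bigr => s /andP[Hs _].
rewrite sgnI_gen // sgnI_1 mulrN mulNr floorN ?mulrNz //.
have Gs : s \in <<S>>%g by rewrite mem_gen.
apply: Cint_rat_Aint; last exact: Aint_class_div_irr1.
rewrite rpred_div ?rpredM ?rpred_nat //.
  by apply: chi_invol_rat => //; exact: (proj2 ((proj1 HS) s Hs)).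
by rewrite irr1_degree rpred_nat.
Qed.

End Sign.



Section Gam.
Variable Gamma : porderZmodType.
Hypothesis Gamma_total : forall x y : Gamma, (x <= y)%R \/ (y <= x)%R.
Hypothesis Gamma_add : forall x y z : Gamma, (x <= y)%R -> (x + z <= y + z)%R.

Lemma max_ge (x y : Gamma) : x <= Order.max x y /\ y <= Order.max x y.
Proof.
rewrite /Order.max; case: ifP => H; first by rewrite (ltW H) lexx.
split => //; case: (Gamma_total x y) => // Hxy.
by move: H; rewrite lt_neqAle Hxy andbT => /negbFE/eqP ->.
Qed.

Lemma foldr_max_ge (l : seq Gamma) d x : x \in l ->
  x <= foldr (fun a b => Order.max a b) d l.
Proof.
elim: l => [|a l IH] //=; rewrite inE => /orP[/eqP -> | /IH H].
  exact: (max_ge a _).1.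
exact: le_trans H (max_ge a _).2.
Qed.

Lemma seqmax_ge (l : seq Gamma) x : x \in l -> x <= seqmax l.
Proof. exact: foldr_max_ge. Qed.

Lemma lerN' (x y : Gamma) : x <= y -> - y <= - x.
Proof.
move=> /(Gamma_add (- x - y)).
by rewrite addNKr addrCA subrr addr0.
Qed.

Lemma astep_le (a b w : Gamma) : a <= (if b - a <= w then a else b - w).
Proof.
case: ifP => H; first exact: lexx.
case: (Gamma_total (b - a) w) => [H'|H']; first by rewrite H' in H.
have := Gamma_add (a - w) H'.
by rewrite addrCA subrr addr0 -addrA addKr.
Qed.

Lemma astep_diff (a b w : Gamma) :
  (if a - b <= - w then b else a - - w) - (if b - a <= w then a else b - w) = w.
Proof.
case: ifP => H2; case: ifP => H1.
- apply/le_anti; rewrite H1 /=.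
  by have := lerN' H2; rewrite opprK opprB.
- by rewrite opprB addrC subrK.
- by rewrite opprK addrAC subrr add0r.
- exfalso; case: (Gamma_total (a - b) (- w)) => H; first by rewrite H in H2.
  by have := lerN' H; rewrite opprK opprB H1.
Qed.

End Gam.

Section Atl.
Variable gT : finGroupType.
Variable Gamma : porderZmodType.
Variable L : gT -> Gamma.

Lemma aprime_ext (f g : forall K : {set gT}, Iirr <<K>>%G -> Gamma) (J : {set gT}) (E : Iirr <<J>>%G) :
  (forall K : {set gT}, K \proper J -> forall M, f K M = g K M) -> aprime f E = aprime g E.
Proof.
move=> H; rewrite /aprime; congr (seqmax (flatten _)).
apply/eq_in_map => K; rewrite mem_enum inE => HK.
by apply: eq_map => M; apply: H.
Qed.

Lemma astep_ext (f g : forall K : {set gT}, Iirr <<K>>%G -> Gamma) (J : {set gT}) (E : Iirr <<J>>%G) :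
  (forall K : {set gT}, K \proper J -> forall M, f K M = g K M) -> astep L f E = astep L g E.
Proof.
by move=> H; rewrite /astep (aprime_ext (sgnI E) H) (aprime_ext E H).
Qed.

Lemma atl_set0 n (M : Iirr <<set0 : {set gT}>>%G) : atl L n M = 0.
Proof. by case: n => //= n; rewrite eqxx. Qed.

Lemma atl_fuel n (J : {set gT}) (E : Iirr <<J>>%G) : (#|J| < n)%N -> atl L n E = atl L n.+1 E.
Proof.
elim: n J E => [//|n IH] J E HJ /=.
case: (J == set0) => //; apply: astep_ext => K HK M; apply: IH.
have := proper_card HK; lia.
Qed.

Lemma atl_fuel_le n m (J : {set gT}) (E : Iirr <<J>>%G) : (#|J| < n)%N -> (n <= m)%N ->
  atl L n E = atl L m E.
Proof.
move=> Hn; elim: m => [|m IH]; first by rewrite leqn0 => /eqP ->.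
rewrite leq_eqVlt => /orP[/eqP -> //| Hlt].
by rewrite IH // atl_fuel //; apply: leq_trans Hn _.
Qed.

Lemma aprime_mem (f : forall K : {set gT}, Iirr <<K>>%G -> Gamma) (J : {set gT}) (E : Iirr <<J>>%G)
  K (M : Iirr <<K>>%G) :
  K \proper J -> E \in irr_constt ('Ind[<<J>>%G] 'chi[<<K>>%G]_M) ->
  f K M \in flatten [seq [seq f K M | M <- enum (Iirr <<K>>%G) &
                          E \in irr_constt ('Ind[<<J>>%G] 'chi[<<K>>%G]_M)]
                   | K <- enum [set K : {set gT} | K \proper J]].
Proof.
move=> HK HE; apply/flatten_mapP; exists K; first by rewrite mem_enum inE.
by apply: map_f; rewrite mem_filter HE mem_enum.
Qed.

End Atl.

Unset Implicit Arguments. Set Strict Implicit.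

Theorem mainTheorem4 (gT : finGroupType) (S : {set gT})
  (Gamma : porderZmodType)
  (Gamma_total : forall x y : Gamma, (x <= y)%R \/ (y <= x)%R)
  (Gamma_add : forall x y z : Gamma, (x <= y)%R -> (x + z <= y + z)%R)
  (L : gT -> Gamma)
  (HS : coxeter_system S) (HL : weight_function S L) :
  (forall E : Iirr <<S>>%G,
     (atilde' L E <= atilde L E)%R /\ (0 <= atilde' L E)%R /\
     (atilde L (sgnI E) - atilde L E = omega L E)%R) /\
  (forall (J : {set gT}), J \proper S -> forall (M : Iirr <<J>>%G) (E : Iirr <<S>>%G),
     E \in irr_constt ('Ind[<<S>>%G] 'chi[<<J>>%G]_M) ->
     (atilde L M <= atilde L E)%R).
Proof.
have AtE : S != set0 -> forall E : Iirr <<S>>%G,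
    atilde L E = astep L (atl L #|S|) E.
  by move=> HS0 E; rewrite /atilde /= (negbTE HS0).
split.
  move=> E; case: (eqVneq S set0) => HS0.
    have Hnil : [set K : {set gT} | K \proper S] = set0.
      by apply/setP => K; rewrite !inE HS0 properE sub0set andbF.
    have Ha' : atilde' L E = 0 by rewrite /atilde' /aprime Hnil enum_set0.
    have At0 : forall E' : Iirr <<S>>%G, atilde L E' = 0.
      have Heq : (S == set0) = true by apply/eqP.
      by move=> E'; rewrite /atilde /= Heq.
    rewrite Ha' !At0 subrr lexx; split => //; split => //.
    rewrite /omega big1 // => s /andP[Hs _]; have := Hs; rewrite [in X in X -> _]HS0 inE //.
  rewrite !AtE // /atilde'; split; first exact: astep_le.
  split.
    have : 'Res[<<set0 : {set gT}>>%G] 'chi[<<S>>%G]_E != 0.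
      apply/eqP => H0; have := irr1_neq0 E.
      by rewrite -(cfRes1 <<set0 : {set gT}>>%G) H0 cfunE eqxx.
    case/neq0_has_constt => M HM.
    have HE : E \in irr_constt ('Ind[<<S>>%G] 'chi[<<set0 : {set gT}>>%G]_M).
      by rewrite constt_Ind_Res.
    have := seqmax_ge Gamma_total (aprime_mem (atl L #|S|) (K := set0) (M := M) _ HE).
    by rewrite atl_set0 proper0 HS0; apply.
  rewrite /astep sgnIK // omega_sgnI //.
  exact: astep_diff.
move=> J HJ M E HE.
have HS0 : S != set0.
  apply/eqP => HS0; move: HJ; by rewrite HS0 properE sub0set andbF.
rewrite AtE //.
apply: le_trans (astep_le Gamma_total Gamma_add _ _ _).
rewrite /atilde (atl_fuel_le L M (n := #|J|.+1) (m := #|S|)) //; last exact: proper_card.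
rewrite /aprime; apply: (seqmax_ge Gamma_total); exact: aprime_mem HJ HE.
Qed.
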